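(* Let $(K_n,\Sigma)$ be a signed complete graph with $n\geq4$, and let $Y(\Sigma)$ be the set of edges $vw$ of $K_n$ such that for every $u\in V(K_n)\setminus\{v,w\}$, the triangle $uvw$ is odd and the number of odd triangles containing $u$ and $v$ is one more than the number of even triangles containing $u$ and $v$. Then $|Y(\Sigma)|\leq1$.
   Context: A signed graph is a pair $(G,\Sigma)$ with $G$ a finite simple graph and $\Sigma\subseteq E(G)$ (the odd edges). A triangle $uvw$ is odd (resp. even) if $|\Sigma\cap\{uv,uw,vw\}|$ is odd (resp. even). *)

(* Defs.v *)
From mathcomp Require Import all_boot.
Set Implicit Arguments. Unset Strict Implicit. Unset Printing Implicit Defensive.

(* The complete graph K_n on vertex set 'I_n; an edge is a 2-element subset.
   A signing Sigma is a set of edges of K_n (the odd edges). *)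
Definition Kn_edges (n : nat) : {set {set 'I_n}} := [set e : {set 'I_n} | #|e| == 2].

Definition signing (n : nat) (Sigma : {set {set 'I_n}}) : Prop :=
  Sigma \subset Kn_edges n.

Definition odd_triangle n (Sigma : {set {set 'I_n}}) (u v w : 'I_n) : bool :=
  odd #|Sigma :&: [set [set u; v]; [set u; w]; [set v; w]]|.

Definition n_odd_tri n (Sigma : {set {set 'I_n}}) (u v : 'I_n) : nat :=
  #|[set x : 'I_n | (x != u) && (x != v) && odd_triangle Sigma u v x]|.
Definition n_even_tri n (Sigma : {set {set 'I_n}}) (u v : 'I_n) : nat :=
  #|[set x : 'I_n | (x != u) && (x != v) && ~~ odd_triangle Sigma u v x]|.

Definition Ycond n (Sigma : {set {set 'I_n}}) (v w : 'I_n) : bool :=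
  [forall u : 'I_n, ((u != v) && (u != w)) ==>
     (odd_triangle Sigma u v w && (n_odd_tri Sigma u v == (n_even_tri Sigma u v).+1))].

(* Y(Sigma): edges vw of K_n (for some naming v,w of the endpoints) satisfying the condition *)
Definition Yset n (Sigma : {set {set 'I_n}}) : {set {set 'I_n}} :=
  [set e : {set 'I_n} | [exists v : 'I_n, exists w : 'I_n,
     (v != w) && (e == [set v; w]) && Ycond Sigma v w]].

(* Main.v *)
Require Import Defs.
From mathcomp Require Import all_boot zify.
Set Warnings "-notation-overridden".
Set Implicit Arguments. Unset Strict Implicit. Unset Printing Implicit Defensive.

Lemma card_sum (T : finType) (A : {set T}) : #|A| = \sum_x (x \in A : nat).
Proof. by rewrite -sum1_card big_mkcond; apply: eq_bigr => x _; case: (x \in A). Qed.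

Lemma cardIS (T : finType) (S X : {set T}) : #|S :&: X| = \sum_(e in X) (e \in S : nat).
Proof.
rewrite card_sum [RHS]big_mkcond; apply: eq_bigr => x _ /=; rewrite inE.
by case: (x \in S); case: (x \in X).
Qed.

Lemma card_tri (T : finType) (S : {set T}) A B C : A != B -> A != C -> B != C ->
  #|S :&: [set A; B; C]| = (A \in S) + (B \in S) + (C \in S).
Proof.
move=> hab hac hbc; rewrite cardIS -setUA big_setU1 /=; last by rewrite !inE negb_or hab hac.
by rewrite big_setU1 /= ?big_set1 ?addnA // inE.
Qed.

Definition sgn_e n (S : {set {set 'I_n}}) (x y : 'I_n) : bool := [set x; y] \in S.
Lemma sC n S (x y : 'I_n) : sgn_e S x y = sgn_e S y x.
Proof. by rewrite /sgn_e setUC. Qed.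

Lemma tE n (S : {set {set 'I_n}}) u v w : u != v -> u != w -> v != w ->
  odd_triangle S u v w = sgn_e S u v (+) sgn_e S u w (+) sgn_e S v w.
Proof.
move=> huv huw hvw; rewrite /odd_triangle card_tri.
- by rewrite /sgn_e !oddD; case: ([set u; v] \in S); case: ([set u; w] \in S); case: ([set v; w] \in S).
- by apply/negP => /eqP/setP/(_ v); rewrite !inE ?eqxx ?(eq_sym v u) ?(eq_sym w u) ?(eq_sym w v) ?(negbTE huv) ?(negbTE huw) ?(negbTE hvw) ?orbT ?orbF.
- by apply/negP => /eqP/setP/(_ u); rewrite !inE ?eqxx ?(eq_sym v u) ?(eq_sym w u) ?(eq_sym w v) ?(negbTE huv) ?(negbTE huw) ?(negbTE hvw) ?orbT ?orbF.
- by apply/negP => /eqP/setP/(_ u); rewrite !inE ?eqxx ?(eq_sym v u) ?(eq_sym w u) ?(eq_sym w v) ?(negbTE huv) ?(negbTE huw) ?(negbTE hvw) ?orbT ?orbF.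
Qed.

Lemma t12 n (S : {set {set 'I_n}}) u v w : odd_triangle S u v w = odd_triangle S v u w.
Proof.
rewrite /odd_triangle (setUC [set v] [set u]); congr (odd #|_ :&: _|).
apply/setP => e; rewrite !inE.
by case: (e == [set u; v]); case: (e == [set u; w]); case: (e == [set v; w]).
Qed.

Lemma t23 n (S : {set {set 'I_n}}) u v w : odd_triangle S u v w = odd_triangle S u w v.
Proof.
rewrite /odd_triangle (setUC [set w] [set v]); congr (odd #|_ :&: _|).
apply/setP => e; rewrite !inE.
by case: (e == [set u; v]); case: (e == [set u; w]); case: (e == [set w; v]).
Qed.

Lemma handshake m (F : 'I_m -> 'I_m -> bool) : (forall x y, F x y = F y x) ->
  (forall x, F x x = false) -> ~~ odd (\sum_x \sum_y (F x y : nat)).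
Proof.
move=> Fs F0.
have -> : \sum_x \sum_y (F x y : nat) =
   \sum_(x : 'I_m) \sum_(y : 'I_m) (((val x < val y) && F x y) : nat) +
   \sum_(x : 'I_m) \sum_(y : 'I_m) (((val y < val x) && F x y) : nat).
  rewrite -big_split /=; apply: eq_bigr => x _; rewrite -big_split /=; apply: eq_bigr => y _.
  case: (ltngtP (val x) (val y)) => hxy /=; first by rewrite addn0.
    done.
  by rewrite (val_inj hxy) F0.
rewrite [X in _ + X]exchange_big /=.
have -> : \sum_(y : 'I_m) \sum_(x : 'I_m) (((val y < val x) && F x y) : nat) =
          \sum_(x : 'I_m) \sum_(y : 'I_m) (((val x < val y) && F x y) : nat).
  by apply: eq_bigr => x _; apply: eq_bigr => y _; rewrite Fs.
by rewrite addnn odd_double.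
Qed.

Lemma tsym3 n (S : {set {set 'I_n}}) u v w : odd_triangle S u v w = odd_triangle S w v u.
Proof. by rewrite t12 t23 t12. Qed.

Lemma card_ne2 n (u v : 'I_n) : u != v -> #|[set x | (x != u) && (x != v)]| = n - 2.
Proof.
move=> huv.
have h1 : #|[set~ u]| = n.-1 by rewrite cardsC1 card_ord.
have h2 := cardsD1 v [set~ u]; rewrite in_setC1 eq_sym huv h1 /= in h2.
have -> : [set x | (x != u) && (x != v)] = [set~ u] :\ v.
  by apply/setP => x; rewrite !inE andbC.
have -> : n - 2 = n.-1 - 1 by rewrite -subn1 -subnDA.
by rewrite h2 addKn.
Qed.

Lemma sum_oe n (S : {set {set 'I_n}}) u v : u != v -> n_odd_tri S u v + n_even_tri S u v = n - 2.
Proof.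
move=> huv; rewrite /n_odd_tri /n_even_tri -(card_ne2 huv) !card_sum -big_split; apply: eq_bigr => x _.
by rewrite !inE; case: (x != u); case: (x != v); case: (odd_triangle S u v x).
Qed.

Lemma YcT n (S : {set {set 'I_n}}) v w u : Ycond S v w -> u != v -> u != w -> odd_triangle S u v w.
Proof. by move=> /forallP/(_ u) + hv hw; rewrite hv hw /= => /andP[]. Qed.

Lemma YcN n (S : {set {set 'I_n}}) v w u : Ycond S v w -> u != v -> u != w ->
  n_odd_tri S u v = (n_even_tri S u v).+1.
Proof. by move=> /forallP/(_ u) + hv hw; rewrite hv hw /= => /andP[_ /eqP]. Qed.

Lemma L1 n (S : {set {set 'I_n}}) v w z : 4 <= n -> Ycond S v w -> z != v -> z != w ->
  (forall x, x != z -> x != v -> odd_triangle S z v x) -> False.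
Proof.
move=> n4 C zv zw H.
have e : n_even_tri S z v = 0.
  apply: eq_card0 => x; rewrite inE.
  case hz: (x != z); case hv: (x != v) => //=; by rewrite H.
have := sum_oe S zv; rewrite (YcN C zv zw) e; lia.
Qed.

Ltac symdiff := repeat match goal with H : is_true (?x != ?y) |- _ =>
  lazymatch goal with
  | _ : is_true (y != x) |- _ => fail
  | _ => have := H; rewrite eq_sym => ?
  end end.

Ltac fin := repeat match goal with |- context [sgn_e ?S ?x ?y] => case: (sgn_e S x y) end; done.


Lemma deg_eq n (S : {set {set 'I_n}}) v w u : Ycond S v w -> u != v -> u != w ->
  (2 * n_odd_tri S u v).+1 = n.
Proof.
move=> C uv uw; have := sum_oe S uv; rewrite (YcN C uv uw).
move: (n_even_tri S u v) => e; lia.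
Qed.

Lemma ar1 a b : (2 * a).+1 = (2 * b).+1 -> a = b. Proof. lia. Qed.
Lemma ar2 n k : 4 <= n -> n = (2 * k).+1 -> n - 2 = (2 * (k - 1)).+1. Proof. lia. Qed.
Lemma ar3 a c : a + 2 * c = a + a -> a = 2 * c. Proof. lia. Qed.

Lemma key_lemma n (S : {set {set 'I_n}}) v w a b : 4 <= n -> v != w -> a != b ->
  Ycond S v w -> Ycond S a b -> [set v; w] = [set a; b].
Proof.
move=> n4 vw ab Cvw Cab.
case: (eqVneq a v) => [eav|av].
  subst a; case: (eqVneq b w) => [->//|bw]; exfalso.
  apply: (L1 n4 Cvw (z:=b)) => //; first by rewrite eq_sym.
  move=> x xb xv; rewrite tsym3; exact: YcT Cab xv xb.
case: (eqVneq a w) => [eaw|aw].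
  subst a; case: (eqVneq b v) => [->|bv]; first by rewrite setUC.
  have bw : b != w by rewrite eq_sym.
  exfalso; apply: (L1 n4 Cvw (z:=b)) => //.
  move=> x xb xv; case: (eqVneq x w) => [->|xw]; first exact: YcT Cvw bv bw.
  have H1 := YcT Cab xw xb; have H2 := YcT Cvw xv xw; have H3 := YcT Cvw bv bw.
  symdiff; move: H1 H2 H3; rewrite !tE //.
  rewrite ?(sC S x b) ?(sC S x v) ?(sC S x w) ?(sC S b v) ?(sC S b w) ?(sC S w v).
  fin.
case: (eqVneq b v) => [ebv|bv].
  subst b; exfalso; apply: (L1 n4 Cvw (z:=a)) => //.
  move=> x xa xv; rewrite -t23 -t12; exact: YcT Cab xa xv.
case: (eqVneq b w) => [ebw|bw].
  subst b; exfalso; apply: (L1 n4 Cvw (z:=a)) => //.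
  move=> x xa xv; case: (eqVneq x w) => [->|xw]; first exact: YcT Cvw av aw.
  have H1 := YcT Cab xa xw; have H2 := YcT Cvw xv xw; have H3 := YcT Cvw av aw.
  symdiff; move: H1 H2 H3; rewrite !tE //.
  rewrite ?(sC S x a) ?(sC S x v) ?(sC S x w) ?(sC S a v) ?(sC S a w) ?(sC S w v).
  fin.
exfalso.
set k := n_odd_tri S a v.
have hk : n = (2 * k).+1 by rewrite (deg_eq Cvw av aw).
have degk : forall u, u != v -> u != w -> n_odd_tri S u v = k.
  by move=> u uv uw; apply: ar1; rewrite (deg_eq Cvw uv uw) (deg_eq Cvw av aw).
have wv : w != v by rewrite eq_sym.
have degw : n_odd_tri S w v = n - 2.
  rewrite /n_odd_tri -(card_ne2 wv) !card_sum; apply: eq_bigr => x _; rewrite !inE.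
  case: (eqVneq x w) => //= xw; case: (eqVneq x v) => //= xv.
  by rewrite tsym3 (YcT Cvw xv xw).
have HS := @handshake n (fun u x => [&& u != v, x != u, x != v & odd_triangle S u v x]).
have Esum : \sum_u \sum_x ([&& u != v, x != u, x != v & odd_triangle S u v x] : nat)
    = \sum_u ((((u != v) && (u != w)) : nat) * k + ((u == w) : nat) * (n - 2)).
  apply: eq_bigr => u _.
  case: (eqVneq u v) => [->|uv]; first by rewrite big1 //= (negbTE vw).
  rewrite /= (_ : \sum_x _ = n_odd_tri S u v); last first.
    by rewrite /n_odd_tri card_sum; apply: eq_bigr => x _; rewrite !inE andbA.
  case: (eqVneq u w) => [->|uw]; first by rewrite degw /= mul1n.
  by rewrite degk // /= mul1n addn0.
have oddk : odd k.
  move: HS; rewrite Esum big_split /= -!big_distrl /=.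
  have -> : \sum_u ((u == w) : nat) = 1.
    by rewrite -(cards1 w) card_sum; apply: eq_bigr => x _; rewrite inE.
  have -> : \sum_u (((u != v) && (u != w)) : nat) = n - 2.
    by rewrite -(card_ne2 vw) card_sum; apply: eq_bigr => x _; rewrite inE.
  rewrite (ar2 n4 hk).
  rewrite oddD !oddM /= oddM /=.
  case: (odd k) => //; apply.
    move=> x y; rewrite (eq_sym y x) [odd_triangle S x v y]tsym3.
    by case: (x != v); case: (y != v); case: (x != y).
  by move=> x; rewrite eqxx /= andbF.
case: (pickP (fun u => [&& u != v, u != w, u != a, u != b & ~~ odd_triangle S a v u])) => [u | H0]; last first.
  apply: (L1 n4 Cvw (z:=a)) => // x xa xv.
  case: (eqVneq x w) => [->|xw]; first exact: YcT Cvw av aw.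
  case: (eqVneq x b) => [->|xb].
    have va : v != a by rewrite eq_sym.
    have vb : v != b by rewrite eq_sym.
    by rewrite t12 (YcT Cab va vb).
  by move: (H0 x); rewrite xv xw xa xb /= => /negbFE.
move=> /and5P [uv uw ua ub hnt].
have hua : n_odd_tri S u a = k.
  by apply: ar1; rewrite (deg_eq Cab ua ub) (deg_eq Cvw av aw).
have E : n_odd_tri S u a + 2 * \sum_x ((((x != u) && (x != v) && odd_triangle S u v x) &&
     ((x != a) && (x != v) && odd_triangle S a v x)) : nat) = n_odd_tri S u v + n_odd_tri S a v.
  rewrite /n_odd_tri !card_sum big_distrr -!big_split; apply: eq_bigr => x _; rewrite !inE.
  case: (eqVneq x u) => [->|xu].
    by rewrite ?eqxx (negbTE hnt) !andbF.
  case: (eqVneq x a) => [->|xa].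
    by rewrite ?eqxx [odd_triangle S u v a]tsym3 (negbTE hnt) !andbF.
  case: (eqVneq x v) => [->|xv].
    by rewrite ?eqxx [odd_triangle S u a v]t12 [odd_triangle S a u v]t23 (negbTE hnt) !andbF.
  rewrite /=; symdiff; move: hnt; rewrite !tE //.
  rewrite ?(sC S a u) ?(sC S v u) ?(sC S x u) ?(sC S v a) ?(sC S x a) ?(sC S x v).
  fin.
move: E; rewrite hua (degk u uv uw) -/k => /ar3 ek.
by move: oddk; rewrite ek oddM.
Qed.


Theorem lemma3p4 (n : nat) (Sigma : {set {set 'I_n}}) :
  4 <= n -> signing Sigma -> #|Yset Sigma| <= 1.
Proof.
move=> n4 _; rewrite leqNgt; apply/negP => /card_gt1P [e1 [e2 [H1 H2 Hne]]].
move: H1 H2 Hne; rewrite !inE => /existsP [v /existsP [w /andP [/andP [vw /eqP E1] C1]]].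
move=> /existsP [a /existsP [b /andP [/andP [ab /eqP E2] C2]]].
by rewrite E1 E2 (key_lemma n4 vw ab C1 C2) eqxx.
Qed.
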